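(* Let $p,p'\ge1$ with $|p-p'|=1$ and let $S=\alpha_{(p,p')}(S')$ where $S'$ is a Sturmian word in which $bb$ does not occur. Let $P$ be a palindrome that is maximal in $S$. Then $P$ is original (in the level $S=\alpha_{(p,p')}(S')$) if and only if $|P|_b\le 1$.
   Context: $\alpha_{(p,p')}$ is the morphism $a\mapsto a^pb$, $b\mapsto a^{p'}b$. A Sturmian word is a right-infinite aperiodic word over $\{a,b\}$ with exactly $n+1$ factors of each length $n$. A palindrome $P$ is maximal in $S$ if $lPl'$ is a factor of $S$ for some letters $l\neq l'$; such an occurrence of $P$ is a maximal occurrence. A center occurrence is an occurrence of $a$, $b$ or $aa$. Write $S'=y_1y_2\cdots$, $S=\alpha(y_1)\alpha(y_2)\cdots$, $\alpha(y_j)$ occupying positions $s_j+1,\dots,s_j+|\alpha(y_j)|$, $s_j=\sum_{t<j}|\alpha(y_t)|$. The reflection of an occurrence $y_j=a$ (resp. $b$) is the center (middle letter if odd length, middle two letters if even) of the run $a^p$ (resp. $a^{p'}$) at positions $s_j+1,\dots,s_j+p$ (resp. $s_j+p'$); the reflection of an occurrence $y_jy_{j+1}=aa$ is the $b$ at position $s_j+p+1$. A center occurrence of $S$ is original if it is not the reflection of any center occurrence of $S'$. A maximal palindrome $P$ of $S$ is original if some maximal occurrence of $P$ in $S$ has an original center occurrence, and is a reflection otherwise. *)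

(* Defs.v *)
(* Words over {a,b} encoded as bool: a = false, b = true.
   Infinite words are functions nat -> bool, positions are 0-based. *)
From mathcomp Require Import all_boot.
Set Implicit Arguments. Unset Strict Implicit. Unset Printing Implicit Defensive.

Definition occurs (S : nat -> bool) (w : seq bool) (i : nat) : Prop :=
  forall k, k < size w -> S (i + k) = nth false w k.

Definition factor (S : nat -> bool) (w : seq bool) : Prop := exists i, occurs S w i.

Definition aperiodic (S : nat -> bool) : Prop :=
  ~ exists N T, 0 < T /\ forall n, N <= n -> S (n + T) = S n.

Definition sturmian (S : nat -> bool) : Prop :=
  aperiodic S /\
  forall n, exists s : seq (seq bool),
    [/\ uniq s, size s = n.+1 & forall w, w \in s <-> (size w = n /\ factor S w)].

Definition palindrome (w : seq bool) : Prop := rev w = w.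

Definition maximal_occ (S : nat -> bool) (P : seq bool) (i : nat) : Prop :=
  [/\ 0 < i, occurs S P i & S i.-1 != S (i + size P)].

Definition maximal (S : nat -> bool) (P : seq bool) : Prop :=
  exists i, maximal_occ S P i.

(* a center occurrence (start, length): an occurrence of a or b (length 1)
   or of aa (length 2) *)
Definition is_center_occ (S : nat -> bool) (c : nat * nat) : Prop :=
  c.2 = 1 \/ [/\ c.2 = 2, S c.1 = false & S c.1.+1 = false].

Definition center_of (start len : nat) : nat * nat :=
  (start + (len.-1)./2, if odd len then 1 else 2).

(* |alpha_(p,p')(x)|, with alpha(a) = a^p b, alpha(b) = a^p' b *)
Definition alen (p p' : nat) (x : bool) : nat := (if x then p' else p).+1.

Definition spos (p p' : nat) (S' : nat -> bool) (j : nat) : nat :=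
  \sum_(t < j) alen p p' (S' t).

(* S = alpha_(p,p')(S') : the block alpha(y_j) occupies positions
   s_j, ..., s_j + |alpha(y_j)| - 1, and it is a^.. b *)
Definition is_image (p p' : nat) (S' S : nat -> bool) : Prop :=
  forall j k, k < alen p p' (S' j) ->
    S (spos p p' S' j + k) = (k == (alen p p' (S' j)).-1).

Definition reflection (p p' : nat) (S' : nat -> bool) (c : nat * nat) : nat * nat :=
  if c.2 == 2 then (spos p p' S' c.1 + p, 1)
  else center_of (spos p p' S' c.1) (if S' c.1 then p' else p).

Definition original_center (p p' : nat) (S' S : nat -> bool) (c : nat * nat) : Prop :=
  is_center_occ S c /\
  ~ exists c', is_center_occ S' c' /\ reflection p p' S' c' = c.

Definition original_pal (p p' : nat) (S' S : nat -> bool) (P : seq bool) : Prop :=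
  exists i, maximal_occ S P i /\ original_center p p' S' S (center_of i (size P)).

(* Main.v *)
Require Import Defs.
From mathcomp Require Import all_boot.
From mathcomp Require Import zify.
Set Implicit Arguments. Unset Strict Implicit.

Lemma seq_le1 (P : seq bool) k1 k2 : count id P <= 1 ->
  k1 < size P -> k2 < size P -> nth false P k1 -> nth false P k2 -> k1 = k2.
Proof.
elim: P k1 k2 => [|b P IH] k1 k2 //= hc h1 h2.
have cpos : forall k, k < size P -> nth false P k -> 0 < count id P.
  move=> k hk hn; rewrite -has_count; apply/(has_nthP false); exists k => //.
case: k1 h1 => [|k1] h1; case: k2 h2 => [|k2] h2 //= n1 n2.
- have := cpos _ h2 n2; move: hc; rewrite n1 /=; lia.
- have := cpos _ h1 n1; move: hc; rewrite n2 /=; lia.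
- congr S; apply: IH => //; move: hc; case: b => /=; lia.
Qed.

Lemma seq_ge2 (P : seq bool) : 1 < count id P ->
  exists k1 k2, [/\ k1 < k2, k2 < size P, nth false P k1 & nth false P k2].
Proof.
elim: P => [|b P IH] //=.
case: b => /= hc.
- have : has id P by rewrite has_count; lia.
  case/(has_nthP false) => k hk hn.
  by exists 0, k.+1; split.
- have [k1 [k2 [? ? ? ?]]] := IH hc.
  by exists k1.+1, k2.+1; split.
Qed.

Lemma cnt_id (P : seq bool) : count_mem true P = count id P.
Proof. by apply: eq_count => x; case: x. Qed.

Definition Lr (p p' : nat) (S' : nat -> bool) j := if S' j then p' else p.

Lemma spos0 p p' S' : spos p p' S' 0 = 0.
Proof. by rewrite /spos big_ord0. Qed.

Lemma sposS p p' S' j : spos p p' S' j.+1 = spos p p' S' j + (Lr p p' S' j).+1.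
Proof. by rewrite /spos big_ord_recr. Qed.

Lemma S_a p p' S' S j x : is_image p p' S' S ->
  spos p p' S' j <= x -> x < spos p p' S' j + Lr p p' S' j -> S x = false.
Proof.
move=> img h1 h2. rewrite -(subnKC h1) img /alen -/(Lr p p' S' j); last lia.
apply/eqP; lia.
Qed.

Lemma S_b p p' S' S j : is_image p p' S' S ->
  S (spos p p' S' j + Lr p p' S' j) = true.
Proof. by move=> img; rewrite img /alen -/(Lr p p' S' j) ?eqxx. Qed.

Lemma S_bprev p p' S' S j : is_image p p' S' S -> 0 < spos p p' S' j ->
  S (spos p p' S' j - 1) = true.
Proof.
move=> img; case: j => [|j]; first by rewrite spos0.
rewrite sposS => _. have -> : spos p p' S' j + (Lr p p' S' j).+1 - 1 =
  spos p p' S' j + Lr p p' S' j by lia.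
exact: S_b.
Qed.

Lemma decomp p p' S' x : exists j,
  spos p p' S' j <= x <= spos p p' S' j + Lr p p' S' j.
Proof.
elim: x => [|x [j /andP [h1 h2]]]; first by exists 0; rewrite spos0.
case: (ltnP x (spos p p' S' j + Lr p p' S' j)) => h3.
- exists j; apply/andP; split; lia.
- exists j.+1; rewrite sposS; apply/andP; split; lia.
Qed.

Lemma mirror S P i : occurs S P i -> palindrome P -> forall x y,
  i <= x -> i <= y -> x + y = 2*i + size P - 1 -> S x = S y.
Proof.
move=> occ pal x y hx hy hxy.
have [n0|npos] := posnP (size P).
  have -> : x = y by lia. done.
rewrite -(subnKC hx) -(subnKC hy) !occ; try lia.
rewrite -{1}pal nth_rev; last lia.
congr nth; lia.
Qed.

Ltac tlia := timeout 15 (repeat match goal with H : @eq bool _ _ |- _ => clear H end; lia).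
Lemma partA p p' S' S P i : 0 < p -> 0 < p' -> p != p' ->
  ~ (exists i, S' i && S' i.+1) -> is_image p p' S' S -> palindrome P ->
  occurs S P i -> 1 < count id P ->
  exists c', is_center_occ S' c' /\ reflection p p' S' c' = center_of i (size P).
Proof.
move=> p0 p'0 pp nobb img pal occ c2.
have mir := mirror occ pal.
have [k1 [k2 [lt12 lt2 b1 b2]]] := seq_ge2 c2.
have bx1 : S (i+k1) = true by rewrite occ //; tlia.
have bx2 : S (i+k2) = true by rewrite occ.
have [q qE0] : exists q, q = i + (size P).-1./2 by eexists.
have [hiq hq] : i <= q /\ 2*(q-i)+1 <= size P <= 2*(q-i)+2.
  rewrite qE0 -divn2 -subn1; split; tlia.
move/andP: hq => [hq1 hq2].
have [j /andP [hs1 hs2]] := decomp p p' S' q.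
have [s sE] : exists s, s = spos p p' S' j by eexists.
have [L LE] : exists L, L = Lr p p' S' j by eexists.
rewrite -sE -LE in hs1 hs2.
have Lpos : 0 < L by rewrite LE /Lr; case: (S' j).
have run : forall z, s <= z -> z < s + L -> S z = false.
  by move=> z; rewrite sE LE; apply: S_a.
have nr : forall z, S z = true -> z < s \/ s + L <= z.
  move=> z hz; case: (ltnP z s) => h; [by left | right].
  rewrite leqNgt; apply/negP => h'; by rewrite run in hz.
case: (ltnP q (s+L)) => hqL.
- exists (j, 1); split; first by left.
  rewrite /reflection /= -sE -/(Lr p p' S' j) -LE.
  suff E : 2*i + size P = 2*s + L.
    rewrite /center_of; congr pair.
      rewrite -qE0 -divn2 -subn1; tlia.
    have : odd (2*s+L) = odd (2*i + size P) by rewrite E.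
    by rewrite !mul2n !oddD !odd_double /= => ->.
  have [xl [hx1 hx2 hx3]] : exists xl, [/\ i <= xl, xl < s & S xl = true].
    case: (nr _ bx1) => h; first by exists (i+k1); split => //; tlia.
    have hb : S (2*i + size P - 1 - (i+k1)) = true by rewrite -bx1; apply: mir; tlia.
    case: (nr _ hb) => h'; last tlia.
    by exists (2*i + size P - 1 - (i+k1)); split => //; tlia.
  have hb : S (2*i + size P - 1 - xl) = true by rewrite -hx3; apply: mir; tlia.
  case: (nr _ hb) => h'; first tlia.
  have s1 : 0 < s by tlia.
  have bs : S (s - 1) = true by rewrite sE; apply: S_bprev => //; rewrite -sE.
  have bsL : S (s + L) = true by rewrite sE LE; apply: S_b.
  have m1 : S (2*i + size P - 1 - (s-1)) = true by rewrite -bs; apply: mir; tlia.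
  have hh : s + L + i <= 2*i + size P - 1 by tlia.
  have m2 : S (2*i + size P - 1 - (s+L)) = true by rewrite -bsL; apply: mir; [tlia|tlia|tlia].
  case: (nr _ m1) => ?; first tlia.
  case: (nr _ m2) => ?; tlia.
- have qsL : q = s + L by tlia.
  have bq : S q = true by rewrite qsL sE LE; apply: S_b.
  have [s2 s2E] : exists s2, s2 = spos p p' S' j.+1 by eexists.
  have [L2 L2E] : exists L2, L2 = Lr p p' S' j.+1 by eexists.
  have s2v : s2 = s + L + 1 by rewrite s2E sposS -sE -LE; tlia.
  have L2pos : 0 < L2 by rewrite L2E /Lr; case: (S' j.+1).
  have run2 : forall z, s2 <= z -> z < s2 + L2 -> S z = false.
    by move=> z; rewrite s2E L2E; apply: S_a.
  have bs2 : S (s2 + L2) = true by rewrite s2E L2E; apply: S_b.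
  have hodd : odd (size P).
    case: (boolP (odd (size P))) => // he.
    have hm : size P = 2*(q-i)+2.
      have : size P <> 2*(q-i)+1 by move=> e; move: he; rewrite e addn1 oddS mul2n odd_double.
      tlia.
    have : S q = S (q+1) by apply: mir; tlia.
    rewrite bq run2 //; tlia.
  have hm : size P = 2*(q-i)+1.
    have : size P <> 2*(q-i)+2 by move=> e; move: hodd; rewrite e addn2 /= mul2n odd_double.
    tlia.
  have M2q : 2*i + size P - 1 = 2*q by tlia.
  have key : forall k, k < size P -> S (i+k) = true -> i + k != q ->
      exists x, [/\ i <= x, x < q & S x = true].
    move=> k hk hb hne; case: (ltnP (i+k) q) => h.
      by exists (i+k); split => //; tlia.
    exists (2*q - (i+k)); split; try tlia.
    by rewrite -hb; apply: mir; tlia.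
  have [x [hx1 hx2 hx3]] : exists x, [/\ i <= x, x < q & S x = true].
    case: (eqVneq (i+k1) q) => e.
      by apply: (key k2) => //; tlia.
    by apply: (key k1) => //; tlia.
  case: (nr _ hx3) => hxs; last tlia.
  have s1 : 0 < s by tlia.
  have bs : S (s - 1) = true by rewrite sE; apply: S_bprev => //; rewrite -sE.
  have m1 : S (2*q - (s-1)) = true by rewrite -bs; apply: mir; tlia.
  have LL2 : L2 <= L.
    case: (ltnP L L2) => h //.
    rewrite run2 in m1; first done; tlia.
  have m2 : S (2*q - (s2+L2)) = true by rewrite -bs2; apply: mir; tlia.
  have eL : L = L2.
    case: (ltnP L2 L) => h; last tlia.
    rewrite run in m2; first done; tlia.
  have hj : S' j = false /\ S' j.+1 = false.
    move: eL; rewrite LE L2E /Lr.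
    case e1: (S' j); case e2: (S' j.+1) => //.
    + by move=> _; exfalso; apply: nobb; exists j; rewrite e1 e2.
    + by move=> e; move/eqP: pp; rewrite e.
    + by move=> e; move/eqP: pp; rewrite e.
  case: hj => hj hj1.
  exists (j, 2); split; first by right.
  rewrite /reflection /= -sE /center_of hodd -qE0.
  congr pair. move: LE; rewrite /Lr hj => LE'; tlia.
Qed.

Lemma half_spec n : 0 < n -> exists h,
  [/\ n.-1./2 = h, 2*h+1 <= n, n <= 2*h+2 & odd n = (n == 2*h+1)].
Proof.
move=> n0; exists n.-1./2; split => //; try (rewrite -divn2 -subn1; lia).
Qed.

Lemma partB p p' S' S P i : 0 < p -> 0 < p' -> is_image p p' S' S ->
  palindrome P -> P != [::] -> maximal_occ S P i -> count id P <= 1 ->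
  original_center p p' S' S (center_of i (size P)).
Proof.
move=> p0 p'0 img pal Pn [ipos occ mxS] c1.
have npos : 0 < size P by rewrite lt0n size_eq0.
have mir := mirror occ pal.
have uq : forall x y, i <= x -> x < i + size P -> i <= y -> y < i + size P ->
    S x = true -> S y = true -> x = y.
  move=> x y h1 h2 h3 h4 bx b_y.
  have nx : nth false P (x - i) = true by rewrite -occ ?subnKC //; tlia.
  have ny : nth false P (y - i) = true by rewrite -occ ?subnKC //; tlia.
  have := seq_le1 c1 _ _ nx ny. move=> /(_ _ _) e.
  have : x - i = y - i by apply: e; tlia.
  tlia.
have [h [hE0 hq1 hq2 hoddE]] := half_spec npos.
move: mxS; rewrite -subn1 => mxS.
split.
- rewrite /is_center_occ /center_of /= hE0.
  case hodd : (odd (size P)); [by left | right].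
  have hn : size P = 2*h+2 by move: hodd; rewrite hoddE => /eqP; tlia.
  have E : S (i+h) = S (i+h).+1 by apply: mir; tlia.
  have hf : S (i+h) = false.
    case hb : (S (i+h)) => //.
    have hb' : S (i+h).+1 = true by rewrite -E.
    have e : i + h = (i+h).+1 by apply: (uq _ _ _ _ _ _ hb hb'); tlia.
    tlia.
  by split => //; rewrite -E.
- move=> [[j l] [hc href]].
  have [s sE] : exists s, s = spos p p' S' j by eexists.
  have [L LE] : exists L, L = Lr p p' S' j by eexists.
  have Lpos : 0 < L by rewrite LE /Lr; case: (S' j).
  have run : forall z, s <= z -> z < s + L -> S z = false.
    by move=> z; rewrite sE LE; apply: S_a.
  have bsL : S (s + L) = true by rewrite sE LE; apply: S_b.
  have bsp : 0 < s -> S (s - 1) = true.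
    by move=> hs; rewrite sE; apply: S_bprev => //; rewrite -sE.
  case: hc => /= [l1 | [l2 hj hj1]].
  + subst l.
    move: href; rewrite /reflection /= -sE -/(Lr p p' S' j) -LE /center_of hE0.
    have [hL [hLE hL1 hL2 hLodd]] := half_spec Lpos.
    rewrite hLE hLodd hoddE.
    case=> e1 e2.
    have E : 2*s + L = 2*i + size P.
      move: e2; case: (eqVneq L (2*hL+1)) => ?; case: (eqVneq (size P) (2*h+1)) => ? //= _; tlia.
    case: (ltngtP (size P) L) => hnL.
    * move: mxS; rewrite !run; first done; tlia.
    * have s1 : 0 < s by tlia.
      have e : s - 1 = s + L by apply: (uq _ _ _ _ _ _ (bsp s1) bsL); tlia.
      tlia.
    * have s1 : 0 < s by tlia.
      have := bsp s1; have := bsL.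
      have -> : s + L = i + size P by tlia.
      have -> : s - 1 = i - 1 by tlia.
      move=> e3 e4; by rewrite e3 e4 in mxS.
  + subst l.
    move: href; rewrite /reflection /= -sE /center_of hE0 hoddE.
    case=> e1; case: (eqVneq (size P) (2*h+1)) => // hn _.
    have Lp : L = p by rewrite LE /Lr hj.
    have [s2 s2E] : exists s2, s2 = spos p p' S' j.+1 by eexists.
    have s2v : s2 = s + L + 1 by rewrite s2E sposS -sE -LE; tlia.
    have L2p : Lr p p' S' j.+1 = p by rewrite /Lr hj1.
    have run2 : forall z, s2 <= z -> z < s2 + p -> S z = false.
      by move=> z; rewrite s2E; have := @S_a p p' S' S j.+1 z img; rewrite L2p.
    have bs2 : S (s2 + p) = true by rewrite s2E; have := @S_b p p' S' S j.+1 img; rewrite L2p.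
    case: (ltngtP h p) => hp.
    * move: mxS; rewrite run ?run2; first done; tlia.
    * have e : s + L = s2 + p by apply: (uq _ _ _ _ _ _ bsL bs2); tlia.
      tlia.
    * have s1 : 0 < s by tlia.
      have := bsp s1; have := bs2.
      have -> : s2 + p = i + size P by tlia.
      have -> : s - 1 = i - 1 by tlia.
      move=> e3 e4; by rewrite e3 e4 in mxS.
Qed.

Theorem lemma4 (p p' : nat) (S' S : nat -> bool) (P : seq bool) :
  0 < p -> 0 < p' -> (p == p'.+1) || (p' == p.+1) ->
  sturmian S' -> ~ (exists i, S' i && S' i.+1) ->
  is_image p p' S' S ->
  palindrome P -> P != [::] -> maximal S P ->
  (original_pal p p' S' S P <-> count_mem true P <= 1).
Proof.
move=> p0 p'0 pp _ nobb img pal Pn [i0 mx0].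
have ppn : p != p' by case/orP: pp => /eqP ->; lia.
rewrite cnt_id; split.
- move=> [i [mx [cocc nrefl]]]; rewrite leqNgt; apply/negP => c2.
  apply: nrefl; case: mx => _ occ _; exact: (partA p0 p'0 ppn nobb img pal occ c2).
- move=> c1; exists i0; split => //; exact: partB.
Qed.
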